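(* Let $(A,\varphi,\phi_A,[\cdot,\cdot]_A,a_A,K,\langle\cdot,\cdot\rangle)$ be a para-Kähler hom-Lie algebroid, $\Omega(X,Y)=\langle(\phi_A\circ K)X,Y\rangle$, $\nabla$ the hom-Levi-Civita connection and $\nabla^a$ the connection determined by $\Omega(\nabla^{a}_XY,\phi_A(Z))=a_A(\phi_A(X))\Omega(Y,Z)-\Omega(\phi_A(Y),[X,Z]_A)$ for all $Z\in\Gamma(A)$. Then $\nabla_XY=\nabla^a_XY$ for all $X,Y\in\Gamma(A^1)$, and $\nabla_{\bar X}\bar Y=\nabla^a_{\bar X}\bar Y$ for all $\bar X,\bar Y\in\Gamma(A^{-1})$.
   Context: Standing conventions. $M$ is a smooth manifold, $\varphi:M\to M$ a diffeomorphism, $\varphi^*f=f\circ\varphi$. A hom-bundle $(A\to M,\varphi,\phi_A)$ is a vector bundle $A\to M$ together with an invertible $\mathbb R$-linear map $\phi_A:\Gamma(A)\to\Gamma(A)$ with $\phi_A(fX)=\varphi^*(f)\phi_A(X)$. $\varphi^!TM$ is the pullback bundle; its sections are identified with $\mathbb R$-linear maps $D:C^\infty(M)\to C^\infty(M)$ with $D(fg)=D(f)\varphi^*(g)+\varphi^*(f)D(g)$. A hom-Lie algebroid $(A,\varphi,\phi_A,[\cdot,\cdot]_A,a_A)$ consists of a hom-bundle, a skew-symmetric $\mathbb R$-bilinear bracket on $\Gamma(A)$ with $\phi_A[X,Y]_A=[\phi_A X,\phi_A Y]_A$ and $[\phi_A(X),[Y,Z]_A]_A+[\phi_A(Y),[Z,X]_A]_A+[\phi_A(Z),[X,Y]_A]_A=0$,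 and a bundle map $a_A:A\to\varphi^!TM$ such that $[X,fY]_A=\varphi^*(f)[X,Y]_A+a_A(\phi_A(X))(f)\phi_A(Y)$, $\varphi^*\circ a_A(X)=a_A(\phi_A(X))\circ\varphi^*$, and $a_A([X,Y]_A)\circ\varphi^*=a_A(\phi_AX)\circ a_A(Y)-a_A(\phi_AY)\circ a_A(X)$. Pseudo-Riemannian metric: a symmetric nondegenerate bilinear form $\langle\cdot,\cdot\rangle$ on $A$ with $\langle\phi_AX,\phi_AY\rangle=\varphi^*\langle X,Y\rangle$. The hom-Levi-Civita connection is the unique $\mathbb R$-bilinear $\nabla:\Gamma(A)\times\Gamma(A)\to\Gamma(A)$ with $\nabla_{fX}Y=\varphi^*(f)\nabla_XY$, $\nabla_X(fY)=\varphi^*(f)\nabla_XY+a_A(\phi_AX)(f)\phi_A(Y)$, $[X,Y]_A=\nabla_XY-\nabla_YX$, and $a_A(\phi_AX)\langle Y,Z\rangle=\langle\nabla_XY,\phi_AZ\rangle+\langle\phi_AY,\nabla_XZ\rangle$. An almost para-complex structure is an invertible map $K:\Gamma(A)\to\Gamma(A)$ with $(\phi_A\circ K)^2=\mathrm{Id}$, $\phi_A\circ K=K\circ\phi_A$, and such that $A^1=\ker(\phi_A\circ K-\mathrm{Id})$ and $A^{-1}=\ker(\phi_A\circ K+\mathrm{Id})$ have the same rank (so $A=A^1\oplus A^{-1}$). $(K,\langle\cdot,\cdot\rangle)$ is almost para-Hermitian if $\langle(\phi_A\circ K)X,(\phi_A\circ K)Y\rangle=-\langle X,Y\rangle$. A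 para-Kähler hom-Lie algebroid is an almost para-Hermitian hom-Lie algebroid with $\nabla_X\phi_A(KY)=\phi_A(K(\nabla_XY))$ for all $X,Y$, $\nabla$ the hom-Levi-Civita connection. *)

(* Defs.v *)
(* Algebraic model of a hom-Lie algebroid:
   F  ~ the real numbers (any real field),
   R  ~ C^oo(M) (a commutative F-algebra),
   V  ~ Gamma(A) (an R-module),
   s  ~ varphi^* (an F-algebra automorphism of R),
   phiA, br (bracket), anch (anchor; a section of varphi^! TM is identified
   with a varphi^*-derivation R -> R), g (metric), nabla, K. *)
From HB Require Import structures.
From mathcomp Require Import all_boot all_order all_algebra.
Set Implicit Arguments. Unset Strict Implicit. Unset Printing Implicit Defensive.
Import GRing.Theory Num.Theory.
Local Open Scope ring_scope.

Section HomLie.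
Variables (F : realFieldType) (R : comAlgType F) (V : lmodType R).

(* F-linearity ("R-linearity" in the paper) of maps on sections *)
Definition Flinear (f : V -> V) :=
  forall (c : F) (u v : V), f (c%:A *: u + v) = c%:A *: f u + f v.

Definition Fbilinear (b : V -> V -> V) :=
  (forall X, Flinear (b X)) /\ (forall Y, Flinear (fun X => b X Y)).

Definition base_automorphism (s : R -> R) :=
  [/\ bijective s, (forall x y, s (x + y) = s x + s y),
      (forall x y, s (x * y) = s x * s y), s 1 = 1
    & (forall (c : F) x, s (c *: x) = c *: s x)].

Definition phi_derivation (s : R -> R) (D : R -> R) :=
  (forall (c : F) x y, D (c *: x + y) = c *: D x + D y) /\
  (forall f h, D (f * h) = D f * s h + s f * D h).

Definition hom_bundle (s : R -> R) (phiA : V -> V) :=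
  [/\ bijective phiA, Flinear phiA
    & forall (f : R) (X : V), phiA (f *: X) = s f *: phiA X].

Definition hom_Lie_algebroid (s : R -> R) (phiA : V -> V)
    (br : V -> V -> V) (anch : V -> R -> R) :=
  base_automorphism s /\ hom_bundle s phiA /\
  (forall X Y, br X Y = - br Y X) /\ Fbilinear br /\
  (forall X Y, phiA (br X Y) = br (phiA X) (phiA Y)) /\
  (forall X Y Z, br (phiA X) (br Y Z) + br (phiA Y) (br Z X)
                 + br (phiA Z) (br X Y) = 0) /\
  (forall X, phi_derivation s (anch X)) /\
  (forall (f : R) X Y h, anch (f *: X + Y) h = f * anch X h + anch Y h) /\
  (forall X Y (f : R), br X (f *: Y) = s f *: br X Y + anch (phiA X) f *: phiA Y) /\
  (forall X f, s (anch X f) = anch (phiA X) (s f)) /\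
  (forall X Y f, anch (br X Y) (s f)
                 = anch (phiA X) (anch Y f) - anch (phiA Y) (anch X f)).

Definition pseudo_metric (s : R -> R) (phiA : V -> V) (g : V -> V -> R) :=
  [/\ (forall X Y, g X Y = g Y X),
      (forall (f : R) X Y Z, g (f *: X + Y) Z = f * g X Z + g Y Z),
      (forall W, (forall Z, g W Z = 0) -> W = 0)
    & (forall X Y, g (phiA X) (phiA Y) = s (g X Y))].

Definition hom_Levi_Civita (s : R -> R) (phiA : V -> V) (br : V -> V -> V)
    (anch : V -> R -> R) (g : V -> V -> R) (nabla : V -> V -> V) :=
  [/\ Fbilinear nabla,
      (forall (f : R) X Y, nabla (f *: X) Y = s f *: nabla X Y),
      (forall X (f : R) Y,
          nabla X (f *: Y) = s f *: nabla X Y + anch (phiA X) f *: phiA Y),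
      (forall X Y, br X Y = nabla X Y - nabla Y X)
    & (forall X Y Z, anch (phiA X) (g Y Z)
                     = g (nabla X Y) (phiA Z) + g (phiA Y) (nabla X Z))].

(* almost para-complex structure (without the equal-rank condition) *)
Definition almost_para_complex (phiA : V -> V) (K : V -> V) :=
  [/\ bijective K, (forall X, phiA (K (phiA (K X))) = X)
    & (forall X, phiA (K X) = K (phiA X))].

Definition almost_para_Hermitian (phiA : V -> V) (K : V -> V) (g : V -> V -> R) :=
  almost_para_complex phiA K /\
  (forall X Y, g (phiA (K X)) (phiA (K Y)) = - g X Y).

Definition para_Kahler (s : R -> R) (phiA : V -> V) (br : V -> V -> V)
    (anch : V -> R -> R) (K : V -> V) (g : V -> V -> R) (nabla : V -> V -> V) :=
  [/\ hom_Lie_algebroid s phiA br anch, pseudo_metric s phiA g,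
      almost_para_Hermitian phiA K g, hom_Levi_Civita s phiA br anch g nabla
    & (forall X Y, nabla X (phiA (K Y)) = phiA (K (nabla X Y)))].

Definition Omega (phiA : V -> V) (K : V -> V) (g : V -> V -> R) (X Y : V) : R :=
  g (phiA (K X)) Y.

Definition inA1 (phiA K : V -> V) (X : V) := phiA (K X) = X.
Definition inAm1 (phiA K : V -> V) (X : V) := phiA (K X) = - X.

End HomLie.

(* Main.v *)
Require Import Defs.
From HB Require Import structures.
From mathcomp Require Import all_boot all_order all_algebra.
Import GRing.Theory Num.Theory.
Local Open Scope ring_scope.

Lemma add_props (A B : zmodType) (f : A -> B) :
  (forall u v, f (u + v) = f u + f v) ->
  f 0 = 0 /\ (forall u, f (- u) = - f u).
Proof.
move=> H.
have f0 : f 0 = 0.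
  by apply: (@addrI _ (f 0)); rewrite -H !addr0.
split=> // u; apply/eqP; rewrite -addr_eq0 -H addNr f0.
by [].
Qed.

Lemma half0 (F : realFieldType) (R : comAlgType F) (x : R) : x = - x -> x = 0.
Proof.
move=> h.
have h2 : x *+ 2 = 0 by rewrite mulr2n {1}h addNr.
have : (2%:R : F)^-1 *: (x *+ 2) = 0 by rewrite h2 scaler0.
rewrite -scaler_nat scalerA mulVf ?scale1r //.
by rewrite pnatr_eq0.
Qed.

Theorem mainTheorem6 (F : realFieldType) (R : comAlgType F) (V : lmodType R)
  (s : R -> R) (phiA : V -> V) (br : V -> V -> V) (anch : V -> R -> R)
  (K : V -> V) (g : V -> V -> R) (nabla nabla_a : V -> V -> V) :
  para_Kahler s phiA br anch K g nabla ->
  (forall X Y Z,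
     Omega phiA K g (nabla_a X Y) (phiA Z)
     = anch (phiA X) (Omega phiA K g Y Z) - Omega phiA K g (phiA Y) (br X Z)) ->
  (forall X Y, inA1 phiA K X -> inA1 phiA K Y -> nabla X Y = nabla_a X Y) /\
  (forall X Y, inAm1 phiA K X -> inAm1 phiA K Y -> nabla X Y = nabla_a X Y).
Proof.
move=> [HL Hm [HPC Hgi] [Hnb Hns Hnf Hbr Hmet] HK] Ha.
case: HL => Hs [[bphi Flphi phis] [skew [Fbr [phibr [jac [Hder [anchl [brf [sanch anchbr]]]]]]]]].
case: Hm => gsym gl gnd ginv.
case: HPC => bK PP phiK.
case: Hnb => Flnab _.
have Fadd : forall f : V -> V, Flinear f -> forall u v, f (u + v) = f u + f v.
  by move=> f Hf u v; have := Hf 1 u v; rewrite scale1r !scale1r.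
have [phi0 phiN] := @add_props _ _ phiA (Fadd _ Flphi).
have nabN : forall X Y, nabla X (- Y) = - nabla X Y.
  by move=> X Y; have [_ h] := @add_props _ _ (nabla X) (Fadd _ (Flnab X)); exact: h.
have gD1 : forall X Y Z, g (X + Y) Z = g X Z + g Y Z.
  by move=> X Y Z; have := gl 1 X Y Z; rewrite scale1r mul1r.
have gN1 : forall u Z, g (- u) Z = - g u Z.
  move=> u Z; have [_ h] := @add_props _ _ (fun X => g X Z) (fun a b => gD1 a b Z).
  exact: h.
have gD2 : forall X Y Z, g Z (X + Y) = g Z X + g Z Y.
  by move=> X Y Z; rewrite gsym gD1 (gsym X) (gsym Y).
have gN2 : forall Z u, g Z (- u) = - g Z u.
  by move=> Z u; rewrite gsym gN1 gsym.
have DN : forall U x, anch U (- x) = - anch U x.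
  move=> U; have [Dl _] := Hder U.
  have Dadd : forall u v, anch U (u + v) = anch U u + anch U v.
    by move=> u v; have := Dl 1 u v; rewrite !scale1r.
  by move=> x; have [_ h] := @add_props _ _ (anch U) Dadd; exact: h.
have key : forall n na, (forall Z, g (phiA (K n)) (phiA Z) = g (phiA (K na)) (phiA Z)) -> n = na.
  move=> n na H.
  have E : phiA (K n) - phiA (K na) = 0.
    apply: gnd => Z'; case: bphi => pinv c1 c2.
    by rewrite -(c2 Z') gD1 gN1 H subrr.
  by rewrite -(PP n) -(PP na); move/eqP: E; rewrite subr_eq0 => /eqP ->.
split.
- move=> X Y hX hY; apply: key => Z.
  have := Ha X Y Z; rewrite /Omega => ->.
  have orth : forall U W, inA1 phiA K U -> inA1 phiA K W -> g U W = 0.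
    move=> U W hU hW; apply: half0; have := Hgi U W; by rewrite hU hW.
  have e1 : phiA (K (phiA Y)) = phiA Y by rewrite -phiK hY.
  have o : g (phiA Y) (nabla Z X) = 0.
    by apply: orth => //; rewrite /inA1 -HK hX.
  rewrite -HK hY e1 Hmet Hbr gD2 gN2 o.
  by rewrite subr0 addrK.
- move=> X Y hX hY; apply: key => Z.
  have := Ha X Y Z; rewrite /Omega => ->.
  have orth : forall U W, inAm1 phiA K U -> inAm1 phiA K W -> g U W = 0.
    move=> U W hU hW; apply: half0; have := Hgi U W; by rewrite hU hW gN1 gN2 opprK.
  have e1 : phiA (K (phiA Y)) = - phiA Y by rewrite -phiK hY phiN.
  have o : g (phiA Y) (nabla Z X) = 0.
    by apply: orth => //; rewrite /inAm1 -HK hX nabN.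
  rewrite -HK hY e1 nabN !gN1 DN Hmet Hbr gD2 gN2 o.
  by rewrite subr0 opprK opprD addrNK.
Qed.
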